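(* Let $n,k,d,\mu$ be integers with $1\le k\le d<n$ and $\mu\in\{1,2,\dots,k\}$, and let $\mathbb{F}_q$ be a finite field with $q\ge n$. Define $$\alpha(k,d;\mu)=\sum_{m=0}^{\mu}(d-k)^{\mu-m}\binom{k}{m},\qquad \beta(k,d;\mu)=\sum_{m=0}^{\mu}(d-k)^{\mu-m}\binom{k-1}{m-1},$$ $$F(k,d;\mu)=\sum_{m=0}^{\mu}k(d-k)^{\mu-m}\binom{k}{m}-\binom{k}{\mu+1}.$$ Then there exists a linear $(n,k,d)$ exact-repair regenerating code over $\mathbb{F}_q$ with parameters $(\alpha,\beta,F)=(\alpha(k,d;\mu),\beta(k,d;\mu),F(k,d;\mu))$.
   Context: Conventions: $0^0=1$; $\binom{\ell}{m}=0$ if $m<0$ or $m>\ell$. An $(n,k,d)$ exact-repair regenerating code over $\mathbb{F}_q$ with parameters $(\alpha,\beta,F)$ encodes a file consisting of $F$ symbols of $\mathbb{F}_q$ into the contents of $n$ nodes, each node storing $\alpha$ symbols of $\mathbb{F}_q$, such that: (data recovery) for every set of $k$ nodes, the file is a function of the contents of these $k$ nodes; (exact repair) for every node $f$ and every set $\mathcal{H}$ of $d$ nodes not containing $f$, each helper $h\in\mathcal H$ can send $\beta$ symbols of $\mathbb{F}_q$, computed from the content of node $h$ (and the identities of $h$ and $f$), from which the content of node $f$ is exactly reconstructed. The code is linear if all node contents and all transmitted repair symbols are $\mathbb{F}_q$-linear functions of the file symbols. *)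

(* Defs.v *)
From HB Require Import structures.
From mathcomp Require Import all_boot all_order all_algebra all_fingroup all_field.
Set Implicit Arguments. Unset Strict Implicit. Unset Printing Implicit Defensive.
Import GRing.Theory.

(* alpha(k,d;mu) = sum_{m=0}^{mu} (d-k)^{mu-m} C(k,m)   (0^0 = 1 via expn) *)
Definition alpha_par (k d mu : nat) : nat :=
  \sum_(m < mu.+1) (d - k) ^ (mu - m) * 'C(k, m).

(* beta(k,d;mu) = sum_{m=0}^{mu} (d-k)^{mu-m} C(k-1,m-1), with C(l,-1) = 0 *)
Definition binom_ext (l : nat) (m : nat) : nat :=
  if m == 0 then 0 else 'C(l, m.-1).
Definition beta_par (k d mu : nat) : nat :=
  \sum_(m < mu.+1) (d - k) ^ (mu - m) * binom_ext k.-1 m.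

(* F(k,d;mu) = sum_{m=0}^{mu} k (d-k)^{mu-m} C(k,m) - C(k,mu+1)
   (the difference is always nonnegative, so truncated subtraction is exact) *)
Definition F_par (k d mu : nat) : nat :=
  \sum_(m < mu.+1) k * (d - k) ^ (mu - m) * 'C(k, m) - 'C(k, mu.+1).

(* A linear (n,k,d) exact-repair regenerating code over the field K with
   parameters (a, b, Fs):
   - the file is x : 'rV[K]_Fs;
   - node i stores x *m G i  (a linear function of the file, a symbols);
   - helper h repairing failed node f sends rep h f (content of h), b symbols,
     and this transmitted data must be a linear function of the file;
   - data recovery: the file is a function of the contents of any k nodes,
     i.e. files agreeing on the contents of those nodes are equal;
   - exact repair: content of f is a function of the d transmitted vectors. *)
Local Open Scope ring_scope.
Definition linear_regen_code (K : fieldType) (n k d a b Fs : nat)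
  (G : 'I_n -> 'M[K]_(Fs, a))
  (rep : 'I_n -> 'I_n -> 'rV[K]_a -> 'rV[K]_b) : Prop :=
  [/\
      (forall (h f : 'I_n) (c : K) (x y : 'rV[K]_Fs),
          rep h f ((c *: x + y) *m G h)
          = c *: rep h f (x *m G h) + rep h f (y *m G h)),
      (forall (S : {set 'I_n}), #|S| = k ->
         forall x y : 'rV[K]_Fs,
           (forall i, i \in S -> x *m G i = y *m G i) -> x = y)
    &
      (forall (f : 'I_n) (H : {set 'I_n}), f \notin H -> #|H| = d ->
         forall x y : 'rV[K]_Fs,
           (forall h, h \in H -> rep h f (x *m G h) = rep h f (y *m G h)) ->
           x *m G f = y *m G f)].
Arguments linear_regen_code K n k d a b Fs G rep : clear implicits.

(* Main.v *)
Require Import Defs.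
From HB Require Import structures.
From mathcomp Require Import all_boot all_order all_algebra all_fingroup all_field.
From mathcomp Require Import ring.
From Stdlib Require Import FunctionalExtensionality.
Set Implicit Arguments. Unset Strict Implicit. Unset Printing Implicit Defensive.
Import GRing.Theory.

Section Bas.
Variables (t k : nat) (Q : {set 'I_k}).

Definition BasT p := {m : 'I_p.+1 & ((p - m).-tuple 'I_t * {J : {set 'I_k} | (#|J| == m) && (J \subset Q)})%type}.

HB.instance Definition _ p := Finite.on (BasT p).

Lemma card_BasT p : #|{: BasT p}| = \sum_(m < p.+1) t ^ (p - m) * 'C(#|Q|, m).
Proof.
rewrite card_tagged sumnE big_map big_enum /=; apply: eq_bigr => m _.
rewrite card_prod card_tuple card_ord card_sig -(cards_draws Q m); congr (_ * _).
by apply: eq_card => J; rewrite !inE andbC.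
Qed.

Definition pt p (x : BasT p) : seq 'I_t * {set 'I_k} := (val (tagged x).1, val (tagged x).2).

Lemma pt_inj p : injective (@pt p).
Proof.
case=> m [w [J hJ]]; case=> m' [w' [J' hJ']] [] /= ew eJ; subst J'.
have emm : m = m'.
  case/andP: hJ => /eqP hJ _; case/andP: hJ' => /eqP hJ' _.
  by apply/val_inj; rewrite /= -hJ -hJ'.
subst m'; congr existT; congr pair; first exact: val_inj.
by congr exist; apply: bool_irrelevance.
Qed.

Lemma pt_surj p (w : seq 'I_t) (I : {set 'I_k}) :
  (size w + #|I|)%N = p -> I \subset Q -> exists x : BasT p, pt x = (w, I).
Proof.
move=> hp IQ.
have hm : (#|I| < p.+1)%N by rewrite ltnS -hp leq_addl.
have hw : size w == p - Ordinal hm by rewrite /= -hp addnK.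
have hJ : (#|I| == Ordinal hm) && (I \subset Q) by rewrite eqxx IQ.
by exists (existT _ (Ordinal hm) (Tuple hw, exist _ I hJ)).
Qed.

Lemma pt_deg p (x : BasT p) : (size (pt x).1 + #|(pt x).2|)%N = p /\ (pt x).2 \subset Q.
Proof.
case: x => m [w J] /=; rewrite size_tuple; move: (valP J) => /andP [/eqP -> ->].
by rewrite subnK // -ltnS.
Qed.

End Bas.

Local Open Scope ring_scope.

Section Ext.
Variable K : fieldType.
Variable k : nat.
Implicit Types (I J : {set 'I_k}) (y : {set 'I_k} -> K).

Definition sgn (j : 'I_k) I : K := (-1) ^+ #|[set i in I | (i < j)%N]|.

Lemma sgn_sq j I : sgn j I * sgn j I = 1.
Proof. by rewrite /sgn -exprD addnn -mul2n exprM sqrrN expr1n expr1n. Qed.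

Lemma sgnU j a J : a \notin J ->
  sgn j (a |: J) = (if (a < j)%N then -1 else 1) * sgn j J.
Proof.
move=> aJ; rewrite /sgn.
have -> : [set i in a |: J | (i < j)%N] =
   if (a < j)%N then a |: [set i in J | (i < j)%N] else [set i in J | (i < j)%N].
  apply/setP=> i; rewrite !inE; case: ifP => aj; rewrite ?inE;
  case: (eqVneq i a) => [->|]; rewrite ?aj ?(negbTE aJ) //=.
case: ifP => _; last by rewrite mul1r.
by rewrite cardsU1 inE (negbTE aJ) /= exprS.
Qed.

Lemma sgn_mul_sq j I (x:K) : sgn j I * x * sgn j I = x.
Proof. by rewrite mulrC mulrA sgn_sq mul1r. Qed.

Variable psi : 'I_k -> K.

Definition iotaA y I := \sum_(j : 'I_k | j \notin I) psi j * sgn j I * y (j |: I).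
Definition wedgeA (a : 'I_k) y I := if a \in I then sgn a (I :\ a) * y (I :\ a) else 0.

Lemma iotaA_lin (c : K) y z I :
  iotaA (fun J => c * y J + z J) I = c * iotaA y I + iotaA z I.
Proof.
rewrite /iotaA mulr_sumr -big_split; apply: eq_bigr => j _ /=; ring.
Qed.

Lemma iotaA_sum (T : Type) (r : seq T) (P : pred T) (F : T -> {set 'I_k} -> K) I :
  iotaA (fun J => \sum_(i <- r | P i) F i J) I = \sum_(i <- r | P i) iotaA (F i) I.
Proof.
rewrite /iotaA exchange_big; apply: eq_bigr => j _ /=; rewrite mulr_sumr //.
Qed.

Lemma wedge_iota a y I :
  iotaA (wedgeA a y) I = psi a * y I - wedgeA a (iotaA y) I.
Proof.
rewrite {1}/iotaA; case aI: (a \in I).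
- rewrite {2}/wedgeA aI /iotaA.
  rewrite [X in _ - _ * X](bigD1 a) /=; last by rewrite in_setD1 eqxx.
  rewrite setD1K // mulrDr opprD addrA -!mulrA [psi a * _]mulrC !mulrA sgn_mul_sq.
  rewrite [y I * _]mulrC subrr sub0r mulr_sumr -sumrN.
  have aJ : a \notin I :\ a by rewrite in_setD1 eqxx.
  apply: eq_big.
    move=> j; rewrite in_setD1 negb_and negbK; case: (eqVneq j a) => [->|] //=.
    by rewrite aI. by rewrite andbT.
  move=> j jI.
  have ja : j != a by apply: contraNneq jI => ->.
  have jJ : j \notin I :\ a by rewrite in_setD1 negb_and (negbTE jI) orbT.
  have -> : wedgeA a y (j |: I) = sgn a (j |: (I :\ a)) * y (j |: (I :\ a)).
    rewrite /wedgeA in_setU1 aI orbT.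
    have -> // : (j |: I) :\ a = j |: (I :\ a).
    apply/setP => i; rewrite !inE; case: (eqVneq i a) => [->|ia] /=; last by [].
    by rewrite eq_sym (negbTE ja).
  rewrite -{1}(setD1K aI) sgnU // sgnU //.
  case: (ltngtP a j) => [aj|ja'|/val_inj eja]; last by rewrite eja eqxx in ja.
    ring.
  ring.
- rewrite /wedgeA aI subr0 (bigD1 a) ?aI //= in_setU1 eqxx /= setU1K ?aI //.
  rewrite big1 ?addr0; last first.
    by move=> j /andP [_ ja]; rewrite in_setU1 eq_sym (negbTE ja) aI mulr0.
  by rewrite -mulrA (mulrA (sgn a I)) sgn_sq mul1r.
Qed.

Lemma sum_antisym (g : 'I_k -> 'I_k -> K) :
  (forall j, g j j = 0) -> (forall j j', g j' j = - g j j') ->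
  \sum_j \sum_j' g j j' = 0.
Proof.
move=> g0 gA.
have E : forall j j', g j j' = (if (j < j')%N then g j j' else 0)
                              + (if (j' < j)%N then g j j' else 0).
  move=> j j'; case: (ltngtP j j') => [h|h|/val_inj->]; rewrite ?addr0 ?add0r //.
under eq_bigr do under eq_bigr do rewrite E.
under eq_bigr do rewrite big_split.
rewrite big_split /= [X in _ + X]exchange_big /=.
rewrite -big_split /= big1 // => j _; rewrite -big_split big1 // => j' _ /=.
by case: ifP => _; rewrite ?addr0 // gA addrC subrr.
Qed.

Lemma iota_iotaA y I : iotaA (iotaA y) I = 0.
Proof.
rewrite /iotaA.
under eq_bigr do rewrite mulr_sumr.
rewrite big_mkcond /=.
under eq_bigr do rewrite big_mkcond /=.
rewrite -[RHS](@sum_antisym (fun j j' => if (j \notin I) && (j' \notin I) && (j' != j) then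
   psi j * sgn j I * (psi j' * sgn j' (j |: I) * y (j' |: (j |: I))) else 0)).
- apply: eq_bigr => j _; case: ifP => jI; last first.
    by rewrite big1 // => j' _; rewrite /= jI.
  by apply: eq_bigr => j' _; rewrite in_setU1 negb_or /= andbC.
- by move=> j; rewrite eqxx andbF.
move=> j j'; rewrite [j' == j]eq_sym [(j' \notin I) && (j \notin I)]andbC.
case: ifP => [/andP [/andP [jI j'I] jj']|]; last by rewrite oppr0.
rewrite setUCA sgnU // sgnU //.
case: (ltngtP j j') => [h|h|/val_inj e]; last by rewrite e eqxx in jj'.
  ring.
ring.
Qed.

End Ext.

Lemma wedgeA_lin (K : fieldType) k a (c : K) (f g : {set 'I_k} -> K) I :
  wedgeA a (fun J => c * f J + g J) I = c * wedgeA a f I + wedgeA a g I.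
Proof. by rewrite /wedgeA; case: ifP => _; rewrite ?mulr0 ?addr0 //; ring. Qed.

Lemma wedgeA_sum (K : fieldType) k a (T : Type) (r : seq T) (P : pred T)
   (F : T -> {set 'I_k} -> K) I :
  wedgeA a (fun J => \sum_(i <- r | P i) F i J) I = \sum_(i <- r | P i) wedgeA a (F i) I.
Proof.
rewrite /wedgeA; case: ifP => _; last by rewrite big1.
by rewrite mulr_sumr.
Qed.

Lemma wedgeA_add (K : fieldType) k a (f g : {set 'I_k} -> K) I :
  wedgeA a (fun J => f J + g J) I = wedgeA a f I + wedgeA a g I.
Proof. by rewrite /wedgeA; case: ifP => _; rewrite ?addr0 // mulrDr. Qed.
Lemma wedgeA_sub (K : fieldType) k a (f g : {set 'I_k} -> K) I :
  wedgeA a (fun J => f J - g J) I = wedgeA a f I - wedgeA a g I.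
Proof. by rewrite /wedgeA; case: ifP => _; rewrite ?subr0 // mulrBr. Qed.
Lemma wedgeA_scale (K : fieldType) k a (c : K) (f : {set 'I_k} -> K) I :
  wedgeA a (fun J => c * f J) I = c * wedgeA a f I.
Proof. by rewrite /wedgeA; case: ifP => _; rewrite ?mulr0 // mulrCA. Qed.

Section Alg.
Variables (K : fieldType) (t k : nat) (psiB : 'I_t -> K) (psiA : 'I_k -> K).
Definition Alg := seq 'I_t -> {set 'I_k} -> K.
Implicit Types (x y : Alg) (w : seq 'I_t) (I J : {set 'I_k}).

Definition Tm x w I := \sum_(b : 'I_t) psiB b * x (b :: w) I.
Definition Sh (c : 'I_t) x : Alg := fun w I => x (c :: w) I.

Fixpoint iota_ w x I : K :=
  match w with
  | [::] => Tm x [::] I + iotaA psiA (x [::]) I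
  | c :: w' => Tm x w I - iota_ w' (Sh c x) I
  end.
Definition iota x : Alg := fun w I => iota_ w x I.

Lemma iota_nil x I : iota x [::] I = Tm x [::] I + iotaA psiA (x [::]) I.
Proof. by []. Qed.
Lemma iota_cons x c w I : iota x (c :: w) I = Tm x (c :: w) I - iota (Sh c x) w I.
Proof. by []. Qed.

Lemma Tm_lin (c : K) x y w I :
  Tm (fun w I => c * x w I + y w I) w I = c * Tm x w I + Tm y w I.
Proof.
rewrite /Tm mulr_sumr -big_split; apply: eq_bigr => b _ /=; ring.
Qed.

Lemma iota_lin (c : K) x y w I :
  iota (fun w I => c * x w I + y w I) w I = c * iota x w I + iota y w I.
Proof.
elim: w x y I => [|e w IH] x y I.
  rewrite !iota_nil iotaA_lin Tm_lin; ring.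
rewrite !iota_cons Tm_lin.
have -> : iota (Sh e (fun w0 I0 => c * x w0 I0 + y w0 I0)) w I =
          c * iota (Sh e x) w I + iota (Sh e y) w I by rewrite -IH.
ring.
Qed.

Lemma iota_sum (T : Type) (r : seq T) (P : pred T) (F : T -> Alg) w I :
  iota (fun w I => \sum_(i <- r | P i) F i w I) w I = \sum_(i <- r | P i) iota (F i) w I.
Proof.
elim: w F I => [|e w IH] F I.
  rewrite iota_nil iotaA_sum /Tm.
  under eq_bigr do rewrite mulr_sumr.
  rewrite exchange_big -big_split /=; apply: eq_bigr => i _.
  by [].
rewrite iota_cons /Sh IH /Tm.
under eq_bigr do rewrite mulr_sumr.
rewrite exchange_big -sumrB; apply: eq_bigr => i _ /=.
by [].
Qed.

Lemma iota_scale (c : K) x w I : iota (fun w I => c * x w I) w I = c * iota x w I.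
Proof.
have := iota_lin c x (fun _ _ => 0) w I.
have -> : iota (fun _ _ => 0) w I = 0.
  have := iota_sum (Nil 'I_1) xpredT (fun _ _ _ => 0) w I.
  by rewrite !big_nil.
by rewrite addr0 => <-; congr iota_; apply: functional_extensionality => u;
  apply: functional_extensionality => J; rewrite addr0.
Qed.

Lemma iota0 w I : iota (fun _ _ => 0) w I = 0.
Proof.
have := iota_sum (Nil 'I_1) xpredT (fun _ _ _ => 0) w I.
by rewrite !big_nil.
Qed.

Definition LB (b : 'I_t) x : Alg :=
  fun w I => if w is c :: w' then (c == b)%:R * x w' I else 0.
Definition LA (a : 'I_k) x : Alg :=
  fun w I => (-1) ^+ size w * wedgeA a (x w) I.

Lemma iotaA0 I : iotaA psiA (fun _ => 0) I = 0.
Proof. by rewrite /iotaA big1 // => j _; rewrite mulr0. Qed.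

Lemma iota_LB b x w I : iota (LB b x) w I = psiB b * x w I - LB b (iota x) w I.
Proof.
case: w => [|c w].
  rewrite iota_nil /= iotaA0 addr0 subr0 /Tm (bigD1 b) //= eqxx mul1r big1 ?addr0 //.
  by move=> e /negbTE ->; rewrite mul0r mulr0.
rewrite iota_cons /= /Tm (bigD1 b) //= eqxx mul1r big1 ?addr0; last first.
  by move=> e /negbTE ->; rewrite mul0r mulr0.
have -> : Sh c (LB b x) = fun w I => (c == b)%:R * x w I by [].
by rewrite iota_scale.
Qed.

Lemma Tm_LA a x w I : Tm (LA a x) w I = - LA a (Tm x) w I.
Proof.
rewrite /Tm /LA wedgeA_sum mulr_sumr -sumrN; apply: eq_bigr => b _ /=.
by rewrite wedgeA_scale exprS; ring.
Qed.

Lemma iota_LA a x w I : iota (LA a x) w I = psiA a * x w I - LA a (iota x) w I.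
Proof.
elim: w x I => [|c w IH] x I.
  rewrite iota_nil Tm_LA.
  have -> : LA a x [::] = wedgeA a (x [::]).
    by apply: functional_extensionality => J; rewrite /LA expr0 mul1r.
  rewrite wedge_iota /LA /= expr0 !mul1r.
  have -> : iota x [::] = fun J => Tm x [::] J + iotaA psiA (x [::]) J by [].
  rewrite wedgeA_add; ring.
rewrite iota_cons Tm_LA.
have -> : Sh c (LA a x) = fun w J => -1 * LA a (Sh c x) w J.
  apply: functional_extensionality => u; apply: functional_extensionality => J.
  by rewrite /Sh /LA /= exprS mulrA.
rewrite iota_scale IH.
have -> : LA a (iota x) (c :: w) I = LA a (Tm x) (c :: w) I + LA a (iota (Sh c x)) w I.
  rewrite /LA.
  have -> : iota x (c :: w) = fun J => Tm x (c :: w) J - iota (Sh c x) w J by [].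
  rewrite wedgeA_sub /= exprS; ring.
rewrite /Sh; ring.
Qed.

Lemma iotaA_add (f g : {set 'I_k} -> K) I :
  iotaA psiA (fun J => f J + g J) I = iotaA psiA f I + iotaA psiA g I.
Proof. by rewrite /iotaA -big_split; apply: eq_bigr => j _ /=; ring. Qed.
Lemma iotaA_scale (c : K) (f : {set 'I_k} -> K) I :
  iotaA psiA (fun J => c * f J) I = c * iotaA psiA f I.
Proof. by rewrite /iotaA mulr_sumr; apply: eq_bigr => j _ /=; ring. Qed.

Lemma Tm_swap x w I :
  \sum_b psiB b * Tm x (b :: w) I = \sum_b psiB b * Tm (Sh b x) w I.
Proof.
rewrite /Tm /Sh; under eq_bigr do rewrite mulr_sumr.
under [RHS]eq_bigr do rewrite mulr_sumr.
rewrite exchange_big; apply: eq_bigr => b _; apply: eq_bigr => c _ /=; ring.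
Qed.

Lemma iota_iota x w I : iota (iota x) w I = 0.
Proof.
elim: w x I => [|c w IH] x I.
  rewrite iota_nil.
  have -> : iota x [::] = fun J => Tm x [::] J + iotaA psiA (x [::]) J by [].
  rewrite iotaA_add iota_iotaA addr0.
  have -> : Tm x [::] = fun J => \sum_b psiB b * x [:: b] J by [].
  rewrite iotaA_sum.
  under eq_bigr do rewrite iotaA_scale.
  have -> : Tm (iota x) [::] I = \sum_b psiB b * Tm x [:: b] I
       - \sum_b psiB b * Tm (Sh b x) [::] I - \sum_b psiB b * iotaA psiA (x [:: b]) I.
    rewrite {1}/Tm -!sumrB; apply: eq_bigr => b _.
    rewrite iota_cons iota_nil /Sh; ring.
  rewrite Tm_swap; ring.
rewrite iota_cons.
have -> : Sh c (iota x) = fun u J => -1 * iota (Sh c x) u J + Tm x (c :: u) J.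
  apply: functional_extensionality => u; apply: functional_extensionality => J.
  rewrite /Sh iota_cons; ring.
rewrite iota_lin IH mulr0 add0r.
have -> : Tm (iota x) (c :: w) I = \sum_b psiB b * Tm x [:: b, c & w] I
       - \sum_b psiB b * Tm (Sh b x) (c :: w) I + \sum_b psiB b * iota (Sh c (Sh b x)) w I.
  rewrite {1}/Tm -!sumrB -big_split; apply: eq_bigr => b _ /=.
  ring.
rewrite Tm_swap subrr add0r.
have -> : (fun u J => Tm x (c :: u) J) = fun u J => \sum_b psiB b * Sh c (Sh b x) u J by [].
rewrite iota_sum; under [X in _ - X]eq_bigr do rewrite iota_scale.
by rewrite subrr.
Qed.

Definition homog p x := forall w I, (size w + #|I|)%N != p -> x w I = 0.

Lemma Sh_homog p c x : homog p.+1 x -> homog p (Sh c x).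
Proof. by move=> h w I hp; apply: h; rewrite /= addSn eqSS. Qed.

Lemma iota_homog0 x : homog 0 x -> forall w I, iota x w I = 0.
Proof.
move=> h0 w; elim: w x h0 => [|c w IH] x0 h I /=.
  rewrite /Tm big1 ?add0r; last by move=> b _; rewrite h ?mulr0.
  rewrite /iotaA big1 // => j _; rewrite h ?mulr0 //.
  by rewrite add0n -lt0n card_gt0; apply/set0Pn; exists j; rewrite in_setU1 eqxx.
rewrite /Tm big1 ?sub0r; last by move=> b _; rewrite h ?mulr0.
rewrite (IH (Sh c x0)) ?oppr0 // => u J _; exact: h.
Qed.

Lemma iota_homog p x : homog p.+1 x -> homog p (iota x).
Proof.
move=> h w; elim: w p x h => [|c w IH] p x h I hp.
  rewrite iota_nil /Tm big1 ?add0r; last by move=> b _; rewrite h ?mulr0 // /= add1n eqSS.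
  rewrite /iotaA big1 // => j jI; rewrite h ?mulr0 //.
  by rewrite cardsU1 jI add0n add1n eqSS.
rewrite iota_cons /Tm big1 ?sub0r; last by move=> b _; rewrite h ?mulr0 // /= !addSn !eqSS -addSn.
case: p h hp => [|p] h hp; first by rewrite iota_homog0 ?oppr0 //; exact: Sh_homog.
rewrite (IH p (Sh c x) (Sh_homog c h)) ?oppr0 //; by move: hp; rewrite /= addSn eqSS.
Qed.

Lemma LB_homog p b x : homog p x -> homog p.+1 (LB b x).
Proof. by move=> h [|c w] I //= hp; rewrite h ?mulr0 // -eqSS -addSn. Qed.

Lemma LA_homog p a x : homog p x -> homog p.+1 (LA a x).
Proof.
move=> h w I hp; rewrite /LA /wedgeA; case: ifP => aI; last by rewrite mulr0.
rewrite h ?mulr0 //; apply: contra hp => /eqP <-.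
by rewrite -(setD1K aI) cardsU1 in_setD1 eqxx /= setU1K ?in_setD1 ?eqxx // addnS.
Qed.

Lemma iota_low y I w : (forall u, y u I = 0) ->
  iota y w I = (-1) ^+ size w * iotaA psiA (y w) I.
Proof.
elim: w y => [|c w IH] y h.
  by rewrite iota_nil /Tm big1 ?add0r ?expr0 ?mul1r // => b _; rewrite h mulr0.
rewrite iota_cons /Tm big1 ?sub0r; last by move=> b _; rewrite h mulr0.
rewrite IH; last by move=> u; exact: h.
by rewrite /= exprS mulN1r mulNr.
Qed.

Lemma iota_P a0 y w J : (forall u I, a0 \notin I -> y u I = 0) -> a0 \in J ->
  iota y w (J :\ a0) = (-1) ^+ size w * (psiA a0 * sgn K a0 (J :\ a0) * y w J).
Proof.
move=> h aJ; rewrite iota_low; last by move=> u; rewrite h // in_setD1 eqxx.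
congr (_ * _); rewrite /iotaA (bigD1 a0) /=; last by rewrite in_setD1 eqxx.
rewrite setD1K // big1 ?addr0 // => j /andP [jJ ja].
rewrite h ?mulr0 // in_setU1 eq_sym (negbTE ja) /= in_setD1 eqxx //.
Qed.

End Alg.

Lemma vdm (K : fieldType) n m (xi : 'I_n -> K) (S : {set 'I_n}) (v : 'I_m -> K) :
  injective xi -> #|S| = m ->
  (forall i, i \in S -> \sum_(a < m) v a * xi i ^+ a = 0) ->
  forall a, v a = 0.
Proof.
move=> xinj cS h.
pose E (i : nat) := if insub i is Some a then v a else 0.
have p0 : \poly_(a < m) E a = 0.
  apply: (@roots_geq_poly_eq0 _ _ (map xi (enum S))).
  - apply/allP => z /mapP [i]; rewrite mem_enum => iS ->.
    rewrite /root horner_poly; apply/eqP; rewrite -[RHS](h i iS); apply: eq_bigr => a _.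
    by rewrite /E valK.
  - by rewrite map_inj_uniq ?enum_uniq.
  - by rewrite size_map -cardE cS size_poly.
move=> a; have := congr1 (fun q : {poly K} => q`_a) p0.
by rewrite coef_poly ltn_ord coef0 /E valK.
Qed.

Section Main.
Variables (K : fieldType) (t k : nat).
Local Notation A := (Alg K t k).

Definition Lj (j : 'I_(k + t)) (x : A) : A :=
  match split j with inl a => LA a x | inr b => LB b x end.
Definition iotaJ (psi : 'I_(k + t) -> K) : A -> A :=
  iota (fun b => psi (rshift k b)) (fun a => psi (lshift t a)).

Lemma iotaJ_Lj psi j x w I :
  iotaJ psi (Lj j x) w I = psi j * x w I - Lj j (iotaJ psi x) w I.
Proof.
rewrite /Lj; have Ej := splitK j.
case E: (split j) => [a|b]; rewrite E in Ej; rewrite -Ej /iotaJ.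
  by rewrite iota_LA.
by rewrite iota_LB.
Qed.

Lemma Lj0 j w I : Lj j (fun _ _ => 0) w I = 0.
Proof.
rewrite /Lj; case: (split j) => [a|b] /=.
  by rewrite /LA /wedgeA; case: ifP; rewrite !mulr0.
by case: w => //= c w; rewrite mulr0.
Qed.

Lemma Lj_homog p j x : homog p x -> homog p.+1 (Lj j x).
Proof.
rewrite /Lj; case: (split j) => [a|b]; [exact: LA_homog | exact: LB_homog].
Qed.

Lemma data_rec n (xi : 'I_n -> K) (S : {set 'I_n}) (xs : 'I_(k + t) -> A) :
  injective xi -> #|S| = k ->
  (forall w I, \sum_(j < k + t) Lj j (xs j) w I = 0) ->
  (forall i, i \in S -> forall w I, \sum_(j < k + t) xi i ^+ j * xs j w I = 0) ->
  forall j w I, xs j w I = 0.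
Proof.
move=> xinj cS hcons hS.
suff H : forall m j w (I : {set 'I_k}), (#|I| < m)%N -> xs j w I = 0.
  by move=> j w I; apply: (H #|I|.+1).
elim=> [//|m IH] j w I; rewrite ltnS leq_eqVlt => /orP [/eqP cI|]; last exact: IH.
have HB : forall b w, xs (rshift k b) w I = 0.
  move=> b w'; have := hcons (b :: w') I.
  rewrite (bigD1 (rshift k b)) //= big1 ?addr0.
    rewrite /Lj -[rshift k b]/(unsplit (inr b)) unsplitK /= eqxx mul1r.
    by [].
  move=> j' nj'; rewrite /Lj; have Ej := splitK j'.
  case E: (split j') => [a|b']; rewrite E in Ej.
    rewrite /LA /wedgeA; case: ifP => aI; last by rewrite !mulr0.
    rewrite IH ?mulr0 //; move: cI; rewrite (cardsD1 a) aI add1n => <-.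
    by [].
  rewrite /LB /=; case: eqP => [eb|nb]; last by rewrite mul0r.
  by move: nj'; rewrite -Ej -eb eqxx.
have Ej := splitK j; case E: (split j) => [a|b]; rewrite E in Ej; last by rewrite -Ej HB.
rewrite -Ej.
have := @vdm K n k xi S (fun a => xs (lshift t a) w I) xinj cS.
apply => i iS.
have := hS i iS w I; rewrite big_split_ord /= [X in _ + X]big1 ?addr0; last first.
  by move=> b _; rewrite HB mulr0.
by move=> H0; rewrite -[RHS]H0; apply: eq_bigr => a' _; rewrite mulrC.
Qed.

Definition psiv (z : K) : 'I_(k + t) -> K := fun j => z ^+ j.
Definition Dn (z : K) (xs : 'I_(k + t) -> A) : A :=
  fun w I => \sum_(j < k + t) z ^+ j * xs j w I.

Lemma iotaJ_Dn psi z xs w I :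
  iotaJ psi (Dn z xs) w I = \sum_(j < k + t) z ^+ j * iotaJ psi (xs j) w I.
Proof.
rewrite /Dn /iotaJ iota_sum; apply: eq_bigr => j _.
by rewrite (iota_scale _ _ (z ^+ j)).
Qed.

Lemma exact_rep n (xi : 'I_n -> K) (H : {set 'I_n}) f (xs : 'I_(k + t) -> A) mu
   (a0 : 'I_k) :
  injective xi -> #|H| = (k + t)%N -> nat_of_ord a0 = 0%N ->
  (forall j, homog mu.+1 (xs j)) ->
  (forall w I, \sum_(j < k + t) Lj j (xs j) w I = 0) ->
  (forall h, h \in H -> forall w (I : {set 'I_k}), (size w + #|I|)%N = mu -> a0 \notin I ->
     iotaJ (psiv (xi f)) (Dn (xi h) xs) w I = 0) ->
  forall w I, Dn (xi f) xs w I = 0.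
Proof.
move=> xinj cH a00 hom hcons hrep.
set psf := psiv (xi f).
have hy : forall h, h \in H -> forall w I, iotaJ psf (Dn (xi h) xs) w I = 0.
  move=> h hH w J.
  have hD : homog mu.+1 (Dn (xi h) xs).
    move=> u I hu; rewrite /Dn big1 // => j _; rewrite hom ?mulr0 //.
  have hyh := iota_homog (fun b => psf (rshift k b)) (fun a => psf (lshift t a)) hD.
  have ylow : forall u (I : {set 'I_k}), a0 \notin I -> iotaJ psf (Dn (xi h) xs) u I = 0.
    move=> u I aI; case: (eqVneq (size u + #|I|)%N mu) => [e|ne].
      exact: hrep.
    exact: hyh.
  case a0J: (a0 \in J); last by apply: ylow; rewrite a0J.
  have := iota_P (fun b => psf (rshift k b)) (fun a => psf (lshift t a)) w ylow a0J.
  rewrite iota_iota /psf /psiv /= a00 expr0 mul1r => /esym /eqP.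
  rewrite mulf_eq0 signr_eq0 /= mulf_eq0 /sgn signr_eq0 /=.
  by move/eqP.
have hx : forall j w I, iotaJ psf (xs j) w I = 0.
  move=> j w I.
  apply: (@vdm K n (k + t) xi H (fun j => iotaJ psf (xs j) w I) xinj cH) => h hH.
  rewrite -[RHS](hy h hH w I) iotaJ_Dn; apply: eq_bigr => j' _; exact: mulrC.
move=> w I.
have L0 : iotaJ psf (fun w I => \sum_(j < k + t) Lj j (xs j) w I) w I = 0.
  have -> : (fun w I => \sum_(j < k + t) Lj j (xs j) w I) = (fun _ _ => 0).
    by do 2 (apply: functional_extensionality => ?); exact: hcons.
  exact: iota0.
move: L0; rewrite /iotaJ iota_sum.
under eq_bigr do rewrite -/(iotaJ psf) (iotaJ_Lj psf).
rewrite sumrB.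
under [X in _ - X = _]eq_bigr => j _.
  have -> : iotaJ psf (xs j) = fun _ _ => 0.
    by do 2 (apply: functional_extensionality => ?); exact: hx.
  rewrite Lj0. over.
rewrite big1_eq subr0 => <-.
by rewrite /Dn; apply: eq_bigr.
Qed.

End Main.

Lemma Lj_lin (K : fieldType) t k j (a : K) (x y : Alg K t k) w I :
  Lj j (fun w I => a * x w I + y w I) w I = a * Lj j x w I + Lj j y w I.
Proof.
rewrite /Lj; case: (split j) => [a'|b] /=.
  by rewrite /LA wedgeA_lin; ring.
by case: w => [|c w] /=; [ring | ring].
Qed.

Lemma mk_lin (K : fieldType) m n (f : 'rV[K]_m -> 'rV[K]_n) :
  (forall a u v, f (a *: u + v) = a *: f u + f v) ->
  forall u, u *m lin1_mx f = f u.
Proof.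
move=> hf u.
pose flM := GRing.isLinear.Build _ _ _ _ f hf.
pose fL : {linear _ -> _} := HB.pack f flM.
exact: (mul_rV_lin1 fL u).
Qed.

Section Cov.
Variables (K : fieldType) (t k : nat).
Local Notation A := (Alg K t k).

Lemma pt_pair (Q : {set 'I_k}) p (x : BasT t Q p) : ((pt x).1, (pt x).2) = pt x.
Proof. by case: (pt x). Qed.

Lemma pts_cover (Q : {set 'I_k}) p (x : A) :
  (forall c : 'I_#|{: BasT t Q p}|, x (pt (enum_val c)).1 (pt (enum_val c)).2 = 0) ->
  forall w (I : {set 'I_k}), (size w + #|I|)%N = p -> I \subset Q -> x w I = 0.
Proof.
move=> h w I hp IQ; have [b eb] := pt_surj hp IQ.
by have := h (enum_rank b); rewrite enum_rankK eb.
Qed.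

Definition funv (Q : {set 'I_k}) p (y : 'rV[K]_#|{: BasT t Q p}|) : A :=
  fun w I => \sum_(c < #|{: BasT t Q p}|) y 0 c * ((pt (enum_val c) == (w, I))%:R).

Lemma funv_pt (Q : {set 'I_k}) p y c : @funv Q p y (pt (enum_val c)).1 (pt (enum_val c)).2 = y 0 c.
Proof.
rewrite /funv (bigD1 c) //= pt_pair eqxx mulr1 big1 ?addr0 // => c' nc.
case: eqP => [/pt_inj/enum_val_inj e|]; last by rewrite mulr0.
by rewrite e eqxx in nc.
Qed.

Lemma funv_homog (Q : {set 'I_k}) p y : homog p (@funv Q p y).
Proof.
move=> w I hw; rewrite /funv big1 // => c _; case: eqP => [e|]; last by rewrite mulr0.
have [hd _] := pt_deg (enum_val c); rewrite e /= in hd.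
by rewrite hd eqxx in hw.
Qed.

Lemma funv_lin (Q : {set 'I_k}) p a y z :
  @funv Q p (a *: y + z) = fun w I => a * funv y w I + funv z w I.
Proof.
apply: functional_extensionality => w; apply: functional_extensionality => I.
rewrite /funv mulr_sumr -big_split; apply: eq_bigr => c _ /=; rewrite !mxE; ring.
Qed.

End Cov.

Section Asm.
Variables (K : fieldType) (n t k mu' : nat) (xi : 'I_n -> K) (a0 : 'I_k).
Hypotheses (xinj : injective xi) (a00 : nat_of_ord a0 = 0%N).
Local Notation mu := mu'.+1.
Local Notation A := (Alg K t k).
Local Notation d := (k + t)%N.
Local Notation Bm := (BasT t [set: 'I_k] mu).
Local Notation Bm1 := (BasT t [set: 'I_k] mu.+1).
Local Notation Bp := (BasT t (~: [set a0]) mu').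
Local Notation al := #|{: Bm}|.
Local Notation al1 := #|{: Bm1}|.
Local Notation be := #|{: Bp}|.

Definition rowj (u : 'rV[K]_(d * al)) (j : 'I_d) : 'rV[K]_al :=
  \row_c u 0 (mxvec_index j c).
Definition xsu (u : 'rV[K]_(d * al)) (j : 'I_d) : A := funv (rowj u j).

Lemma rowj_lin a u v j : rowj (a *: u + v) j = a *: rowj u j + rowj v j.
Proof. by apply/rowP => c; rewrite !mxE. Qed.

Definition Mlin (u : 'rV[K]_(d * al)) : 'rV[K]_al1 :=
  \row_c' \sum_(j < d) Lj j (xsu u j) (pt (enum_val c')).1 (pt (enum_val c')).2.

Lemma Mlin_lin a u v : Mlin (a *: u + v) = a *: Mlin u + Mlin v.
Proof.
apply/rowP => c'; rewrite !mxE mulr_sumr -big_split; apply: eq_bigr => j _ /=.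
by rewrite /xsu rowj_lin funv_lin Lj_lin.
Qed.

Definition Cn (i : 'I_n) (u : 'rV[K]_(d * al)) : 'rV[K]_al :=
  \row_c Dn (xi i) (xsu u) (pt (enum_val c)).1 (pt (enum_val c)).2.

Lemma Cn_lin i a u v : Cn i (a *: u + v) = a *: Cn i u + Cn i v.
Proof.
apply/rowP => c; rewrite !mxE /Dn mulr_sumr -big_split; apply: eq_bigr => j _ /=.
rewrite /xsu rowj_lin funv_lin; ring.
Qed.

Definition rep (h f : 'I_n) (y : 'rV[K]_al) : 'rV[K]_be :=
  \row_r iotaJ (psiv (xi f)) (funv y) (pt (enum_val r)).1 (pt (enum_val r)).2.

Lemma rep_lin h f a y z : rep h f (a *: y + z) = a *: rep h f y + rep h f z.
Proof.
apply/rowP => r; rewrite !mxE funv_lin /iotaJ iota_lin //.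
Qed.

Lemma funv_vec (x : A) : homog mu x ->
  funv (\row_(c < al) x (pt (enum_val c)).1 (pt (enum_val c)).2) = x.
Proof.
move=> hx; apply: functional_extensionality => w; apply: functional_extensionality => I.
case: (eqVneq (size w + #|I|)%N mu) => [e|ne]; last first.
  by rewrite funv_homog // hx.
have [b eb] := pt_surj e (subsetT I).
have := funv_pt (\row_(c < al) x (pt (enum_val c)).1 (pt (enum_val c)).2) (enum_rank b).
rewrite mxE (enum_rankK b) eb. done.
Qed.

Lemma xsu_homog u j : homog mu (xsu u j).
Proof. exact: funv_homog. Qed.

Lemma cons_of u : Mlin u = 0 -> forall w I, \sum_(j < d) Lj j (xsu u j) w I = 0.
Proof.
move=> hu w I.
case: (eqVneq (size w + #|I|)%N mu.+1) => [e|ne]; last first.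
  by rewrite big1 // => j _; rewrite (Lj_homog j (xsu_homog u j)).
apply: (@pts_cover K t k [set: 'I_k] mu.+1 (fun w I => \sum_(j < d) Lj j (xsu u j) w I)) => //.
by move=> c; have := congr1 (fun v : 'rV[K]_al1 => v 0 c) hu; rewrite !mxE.
Qed.


Lemma subC1 (I : {set 'I_k}) : (I \subset ~: [set a0]) = (a0 \notin I).
Proof. by rewrite subsetC sub1set inE. Qed.

Lemma construct (F : nat) : (F <= d * al - al1)%N ->
  exists (G : 'I_n -> 'M[K]_(F, al)) (rp : 'I_n -> 'I_n -> 'rV[K]_al -> 'rV[K]_be),
    linear_regen_code K n k d al be F G rp.
Proof.
move=> hF.
pose Mm := lin1_mx Mlin.
have hM u : u *m Mm = Mlin u := mk_lin Mlin_lin u.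
pose Ker := kermx Mm.
have hr : (F <= \rank Ker)%N.
  rewrite mxrank_ker; apply: (leq_trans hF); apply: leq_sub2l; exact: rank_leq_col.
pose Bk := row_base Ker.
pose Sel : 'M[K]_(F, \rank Ker) := \matrix_(i, j) ((i : nat) == j)%:R.
pose W := Sel *m Bk.
have WM : W *m Mm = 0.
  rewrite -mulmxA; have -> : Bk *m Mm = 0 by apply/sub_kermxP; rewrite eq_row_base.
  by rewrite mulmx0.
have Winj (x : 'rV[K]_F) : x *m W = 0 -> x = 0.
  rewrite mulmxA -(mul0mx _ Bk) => /(row_free_inj (row_base_free Ker)) hx.
  apply/rowP => i; have := congr1 (fun v : 'rV[K]_(\rank Ker) => v 0 (widen_ord hr i)) hx.
  rewrite !mxE (bigD1 i) //= !mxE eqxx mulr1 big1 ?addr0 // => l nl.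
  rewrite !mxE /=; case: eqP => [/val_inj e|]; [by rewrite e eqxx in nl | by rewrite mulr0].
pose N i := lin1_mx (Cn i).
have hN i u : u *m N i = Cn i u := mk_lin (@Cn_lin i) u.
have cons0 z : forall w I, \sum_(j < d) Lj j (xsu (z *m W) j) w I = 0.
  by apply: cons_of; rewrite -hM -mulmxA WM mulmx0.
have u0 u : (forall j w I, xsu u j w I = 0) -> u = 0.
  move=> h; apply/rowP => r; case/mxvec_indexP: r => j c.
  by have := h j (pt (enum_val c)).1 (pt (enum_val c)).2; rewrite /xsu funv_pt mxE => ->; rewrite mxE.
have Dn0 u i : Cn i u = 0 -> forall w I, Dn (xi i) (xsu u) w I = 0.
  move=> hc w I; case: (eqVneq (size w + #|I|)%N mu) => [e|ne]; last first.
    by rewrite /Dn big1 // => j _; rewrite xsu_homog ?mulr0.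
  apply: (@pts_cover K t k [set: 'I_k] mu (Dn (xi i) (xsu u))) => //.
  by move=> c; have := congr1 (fun v : 'rV[K]_al => v 0 c) hc; rewrite !mxE.
exists (fun i => W *m N i), rep; split.
- by move=> h f c x y; rewrite mulmxDl -scalemxAl rep_lin.
- move=> S cS x y hS; apply/eqP; rewrite -subr_eq0; apply/eqP; apply: Winj.
  apply: u0; apply: (data_rec xinj cS (cons0 _)) => i iS; apply: Dn0.
  by rewrite -hN -mulmxA mulmxBl (hS i iS) subrr.
- move=> f H fH cH x y hrep.
  apply/eqP; rewrite -subr_eq0 -mulmxBl mulmxA hN; apply/eqP.
  apply/rowP => c; rewrite mxE [RHS]mxE.
  apply: (exact_rep xinj cH a00 (@xsu_homog _) (cons0 _)) => h hH w I e aI.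
  have hr0 : rep h f (Cn h ((x - y) *m W)) = 0.
    rewrite -hN -mulmxA mulmxBl -[X in rep h f X]addrC -scaleN1r.
    by rewrite rep_lin (hrep h hH) scaleN1r addNr.
  have hDh : homog mu (Dn (xi h) (xsu ((x - y) *m W))).
    by move=> u J hu; rewrite /Dn big1 // => j _; rewrite xsu_homog ?mulr0.
  apply: (@pts_cover K t k (~: [set a0]) mu'
     (iotaJ (psiv (xi f)) (Dn (xi h) (xsu ((x - y) *m W))))) => //; last by rewrite subC1.
  move=> r; have := congr1 (fun v : 'rV[K]_be => v 0 r) hr0.
  by rewrite !mxE /Cn funv_vec.
Qed.

End Asm.

Close Scope ring_scope.

Lemma card_alpha t k mu : #|{: BasT t [set: 'I_k] mu}| = alpha_par k (k + t) mu.
Proof.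
by rewrite card_BasT cardsT card_ord /alpha_par addKn.
Qed.

Lemma card_beta t k (a0 : 'I_k) mu' : #|{: BasT t (~: [set a0]) mu'}| = beta_par k (k + t) mu'.+1.
Proof.
rewrite card_BasT cardsC1 card_ord /beta_par addKn [RHS]big_ord_recl /= muln0 add0n.
by apply: eq_bigr => i _; rewrite subSS.
Qed.

Lemma card_F t k mu : (F_par k (k + t) mu <=
   (k + t) * #|{: BasT t [set: 'I_k] mu}| - #|{: BasT t [set: 'I_k] mu.+1}|)%N.
Proof.
rewrite !card_BasT cardsT card_ord /F_par addKn.
set al := \sum_(i < mu.+1) t ^ (mu - i) * 'C(k, i).
have E1 : \sum_(m < mu.+2) t ^ (mu.+1 - m) * 'C(k, m) = (t * al + 'C(k, mu.+1))%N.
  rewrite big_ord_recr /= subnn expn0 mul1n; congr (_ + _)%N.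
  rewrite /al big_distrr /=; apply: eq_bigr => i _; rewrite subSn ?expnS ?mulnA //; by rewrite -ltnS.
have E2 : \sum_(m < mu.+1) k * t ^ (mu - m) * 'C(k, m) = (k * al)%N.
  by rewrite /al big_distrr /=; apply: eq_bigr => i _; rewrite mulnA.
by rewrite E1 E2 mulnDl [(t * _ + _)%N]addnC subnDr.
Qed.

Theorem theorem1 (n k d mu : nat) (K : finFieldType)
  (hk : (1 <= k)%N) (hkd : (k <= d)%N) (hdn : (d < n)%N)
  (hmu1 : (1 <= mu)%N) (hmuk : (mu <= k)%N) (hq : (n <= #|K|)%N) :
  exists (G : 'I_n -> 'M[K]_(F_par k d mu, alpha_par k d mu))
         (rep : 'I_n -> 'I_n -> 'rV[K]_(alpha_par k d mu) -> 'rV[K]_(beta_par k d mu)),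
    linear_regen_code K n k d (alpha_par k d mu) (beta_par k d mu) (F_par k d mu) G rep.
Proof.
have [t ->] : exists t, d = (k + t)%N by exists (d - k); rewrite subnKC.
case: mu hmu1 hmuk => [//|mu'] _ _.
pose a0 : 'I_k := Ordinal hk.
pose xi (i : 'I_n) : K := enum_val (widen_ord hq i).
have xinj : injective xi.
  move=> i j h; apply/val_inj; have := congr1 val (enum_val_inj h); by [].
rewrite -card_alpha -(card_beta t a0).
apply: (@construct K n t k mu' xi a0 xinj erefl).
exact: card_F.
Qed.
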